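(* Let $n\ge2$, $A\in\mathbb{R}^{n\times n}$ symmetric positive definite with largest and smallest eigenvalues $\lambda_1,\lambda_n$, $\rho=\lambda_1-\lambda_n$, and $f(\mathbf{z})=\frac12\mathbf{z}^TA\mathbf{z}+\frac{\beta}{2}\sum_kz_k^4$ with $\beta>\frac{18n^3}{n-1}\rho$. Then every local minimizer $\mathbf{y}$ of $f$ on $\mathbb{S}^{n-1}$ satisfies $f(\mathbf{y})-\min_{\mathbf{z}\in\mathbb{S}^{n-1}}f(\mathbf{z})\le\frac{1}{18n}\min_{\mathbf{z}\in\mathbb{S}^{n-1}}f(\mathbf{z})$.
   Context: $\mathbb{S}^{n-1}$ is the unit sphere in $\mathbb{R}^n$. *)

(* Defs.v *)
From HB Require Import structures.
From mathcomp Require Import all_boot all_order all_algebra.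
From mathcomp Require Import classical_sets reals.
Set Implicit Arguments. Unset Strict Implicit. Unset Printing Implicit Defensive.
Import Order.TTheory GRing.Theory Num.Theory.
Local Open Scope ring_scope.
Local Open Scope classical_set_scope.

Definition qform (R : realType) (n : nat) (A : 'M[R]_n) (z : 'cV[R]_n) : R :=
  (z^T *m A *m z) 0 0.

Definition symmetric_mx (R : realType) (n : nat) (A : 'M[R]_n) : Prop := A^T = A.

Definition posdef_mx (R : realType) (n : nat) (A : 'M[R]_n) : Prop :=
  forall z : 'cV[R]_n, z != 0 -> 0 < qform A z.

Definition sphere (R : realType) (n : nat) : set 'cV[R]_n :=
  [set z | \sum_i (z i 0) ^+ 2 = 1].

Definition fobj (R : realType) (n : nat) (A : 'M[R]_n) (beta : R) (z : 'cV[R]_n) : R :=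
  qform A z / 2 + beta / 2 * \sum_k (z k 0) ^+ 4.

Definition local_min_on (R : realType) (n : nat) (g : 'cV[R]_n -> R)
    (S : set 'cV[R]_n) (y : 'cV[R]_n) : Prop :=
  S y /\ exists eps : R, 0 < eps /\
    forall z, S z -> \sum_i (z i 0 - y i 0) ^+ 2 < eps ^+ 2 -> g y <= g z.

(* Main.v *)
Require Import Defs.
From HB Require Import structures.
From mathcomp Require Import all_boot all_order all_algebra.
From mathcomp Require Import classical_sets reals.
From mathcomp Require Import complex spectral sesquilinear.
From mathcomp Require Import ring lra.
Import Order.TTheory GRing.Theory Num.Theory Num.Def.
Local Open Scope ring_scope.
Local Open Scope classical_set_scope.
Set Implicit Arguments.
Unset Strict Implicit.

Section Spec.
Variable R : realType.
Local Notation C := (R[i]).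
Local Notation f := (real_complex R).

Lemma f_real (x : R) : f x \is Num.real.
Proof.
rewrite realE; have [x0|x0] := lerP 0 x.
  by rewrite ler0c x0.
apply/orP; right; rewrite -[f x]opprK oppr_le0 -rmorphN ler0c oppr_ge0; exact: ltW.
Qed.

Lemma fRe (x : C) : x \is Num.real -> f (complex.Re x) = x.
Proof. by move=> xr; rewrite complexRe; apply/Creal_ReP. Qed.

Lemma sum_uv m (u v : 'cV[C]_m) : (u^T *m v) 0 0 = \sum_i u i 0 * v i 0.
Proof. by rewrite mxE; apply: eq_bigr => i _; rewrite mxE. Qed.

Lemma sum_udv m (u v : 'cV[C]_m) (d : 'rV[C]_m) :
  (u^T *m diag_mx d *m v) 0 0 = \sum_i u i 0 * d 0 i * v i 0.
Proof.
rewrite mxE; apply: eq_bigr => i _; rewrite mul_mx_diag !mxE; done.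
Qed.


Local Open Scope sesquilinear_scope.
Lemma spec_repr n (A : 'M[R]_n) : A^T = A -> forall z : 'cV[R]_n,
  exists c a : 'I_n -> R, (forall i, 0 <= c i) /\ (forall i, eigenvalue A (a i)) /\
   \sum_k z k 0 ^+ 2 = \sum_i c i /\ (z^T *m A *m z) 0 0 = \sum_i c i * a i /\
   \sum_k ((A *m z) k 0) ^+ 2 = \sum_i c i * a i ^+ 2.
Proof.
move=> sA z.
pose AC := A ^ f; pose zc := z ^ f.
have ACr : AC \is a realmx by apply/mxOverP => i j; rewrite mxE f_real.
have zcr : zc \is a realmx by apply/mxOverP => i j; rewrite mxE f_real.
have ACT : AC^T = AC by apply/matrixP => i j; rewrite !mxE -[in LHS]sA mxE.
have ACs : AC \is symmetricmx.
  by apply/is_hermitianmxP; rewrite expr0 scale1r map_mx_id // ACT.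
have Herm := realsym_hermsym ACs ACr.
have /orthomx_spectralP HA := hermitian_normalmx Herm.
have Pu := spectral_unitarymx AC.
have dr := hermitian_spectral_diag_real Herm.
set P := spectralmx AC in HA Pu; set d := spectral_diag AC in HA dr.
have PPt : P *m P^t* = 1%:M := unitarymxP Pu.
have iP : invmx P = P^t* := invmx_unitary Pu.
have PtP : P^t* *m P = 1%:M by rewrite -iP mulVmx ?spectral_unit.
pose w := P *m zc.
have key : zc^T *m P^t* = (map_mx conjC w)^T.
  by rewrite /w map_mxM trmx_mul (realmxC zcr) !map_trmx.
have eAC : AC = P^t* *m diag_mx d *m P by rewrite {1}HA iP.
pose c i := complex.Re (w i 0 * conjC (w i 0)).
pose a i := complex.Re (d 0 i).
have cE i : f (c i) = conjC (w i 0) * w i 0.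
  by rewrite fRe; [exact: mulrC | rewrite ger0_real // mul_conjC_ge0].
have aE i : f (a i) = d 0 i by rewrite fRe //; apply: (mxOverP dr).
exists c, a; split; [|split; [|split; [|split]]].
- move=> i; rewrite -ler0c; have := cE i; rewrite /real_complex_def => ->.
  by rewrite mulrC mul_conjC_ge0.
- move=> i; rewrite eigenvalue_root_char -(fmorph_root f) map_char_poly /= aE.
  rewrite -eigenvalue_root_char; apply/eigenvalueP; exists (row i P).
    rewrite -row_mul -/AC eAC !mulmxA PPt mul1mx row_mul row_diag_mx -scalemxAl.
    by rewrite -rowE.
  apply/eqP => r0; have := congr1 (fun M => M *m P^t*) r0.
  rewrite /= mul0mx -row_mul PPt row1 => /rowP /(_ i); rewrite !mxE eqxx /=.
  by rewrite eqxx mulr1n; apply/eqP; exact: oner_neq0.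
- apply: (fmorph_inj f); rewrite !rmorph_sum /=.
  transitivity ((zc^T *m zc) 0 0).
    by rewrite sum_uv; apply: eq_bigr => i _; rewrite !mxE rmorphXn expr2.
  have -> : zc^T *m zc = zc^T *m P^t* *m (P *m zc) by rewrite mulmxA -[zc^T *m P^t* *m P]mulmxA PtP mulmx1.
  rewrite key sum_uv.
  by apply: eq_bigr => i _; rewrite cE mxE.
- apply: (fmorph_inj f); rewrite !rmorph_sum /=.
  transitivity ((zc^T *m AC *m zc) 0 0).
    by rewrite /zc /AC map_trmx -!map_mxM [in RHS]mxE.
  rewrite eAC !mulmxA key -mulmxA sum_udv.
  by apply: eq_bigr => i _; rewrite rmorphM /= cE aE mxE mulrAC.
- apply: (fmorph_inj f); rewrite !rmorph_sum /=.
  transitivity (((AC *m zc)^T *m (AC *m zc)) 0 0).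
    rewrite sum_uv; apply: eq_bigr => i _; rewrite rmorphXn expr2.
    by rewrite /AC /zc -map_mxM [in RHS]mxE.
  rewrite trmx_mul ACT eAC !mulmxA key.
  rewrite -[_ *m P *m P^t*]mulmxA PPt mulmx1 -[_ *m diag_mx d *m diag_mx d]mulmxA mulmx_diag.
  rewrite -mulmxA sum_udv.
  by apply: eq_bigr => i _; rewrite rmorphM rmorphXn /= cE aE !mxE expr2 mulrAC.
Qed.
End Spec.

Lemma small_s (R : realFieldType) (d e : R) : 0 < d -> 0 < e ->
  exists s : R, [/\ 0 < s, s < d, s <= 1 & s <= e].
Proof.
move=> d0 e0; exists (Num.min (Num.min (d / 2) (1 / 2)) e).
have h1 : 0 < d / 2 by lra.
have h2 : d / 2 < d by lra.
have h3 : (0:R) < 1 / 2 by lra.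
have h4 : (1 / 2 : R) <= 1 by lra.
by rewrite !lt_min !gt_min !ge_min h1 e0 h2 h3 h4 lexx !orbT.
Qed.

Lemma poly_small (R : realFieldType) (a1 a2 K d : R) (tail : R -> R) :
  0 < d -> (forall t, `|t| <= 1 -> `|tail t| <= K * `|t| ^+ 3) ->
  (forall t, t != 0 -> `|t| < d -> 0 <= a1 * t + a2 * t ^+ 2 + tail t) ->
  a1 = 0 /\ 0 <= a2.
Proof.
move=> d0 htail hD.
have K0 : 0 <= K.
  have := htail 1; rewrite normr1 expr1n mulr1 => /(_ (lexx _)).
  by apply: le_trans.
have a1E : a1 = 0.
  apply/eqP; apply/negP => /negP a10.
  have na1 : 0 < `|a1| by rewrite normr_gt0.
  have e0 : 0 < `|a1| / (2 * (`|a2| + K + 1)).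
    by apply: divr_gt0 => //; rewrite pmulr_rgt0 //; rewrite ltr_pwDr // addr_ge0.
  have [s [s0 sd s1 se]] := @small_s _ _ _ d0 e0.
  pose t := if 0 < a1 then - s else s.
  have at_ : a1 * t = - `|a1| * s.
    rewrite /t; case: ifP => h.
      by rewrite gtr0_norm // mulrN mulNr.
    by rewrite ler0_norm ?mulNr ?opprK // leNgt h.
  have nt : `|t| = s by rewrite /t; case: ifP => _; rewrite ?normrN gtr0_norm.
  have t0 : t != 0 by rewrite -normr_gt0 nt.
  have := hD t t0; rewrite nt => /(_ sd).
  have := htail t; rewrite nt => /(_ s1).
  rewrite at_ => /ler_normlP [_ htl] hpos.
  have ht2 : a2 * t ^+ 2 <= `|a2| * s ^+ 2.
    by rewrite -nt -normrX -normrM real_ler_norm // num_real.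
  have s3 : s ^+ 3 <= s ^+ 2 by rewrite exprSr ler_piMr // ?exprn_ge0 // ltW.
  set M := `|a2| + K.
  have M0 : 0 <= M by rewrite /M addr_ge0.
  have hK3 : K * s ^+ 3 <= K * s ^+ 2 by rewrite ler_wpM2l.
  have h5 : 0 <= - `|a1| * s + M * s ^+ 2 by rewrite /M; lra.
  have h6 : M * s <= M * (`|a1| / (2 * (M + 1))) by rewrite ler_wpM2l.
  have h7 : M * (`|a1| / (2 * (M + 1))) < `|a1|.
    rewrite mulrA ltr_pdivrMr; last by lra.
    nra.
  have : s * (M * s) <= s * (M * (`|a1| / (2 * (M + 1)))) by rewrite ler_wpM2l // ltW.
  move: h7 h5; set e := M * _ => h7 h5 h8.
  nra.

have a2E : 0 <= a2.
  rewrite leNgt; apply/negP => a2n.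
  have e0 : 0 < - a2 / (2 * (K + 1)) by apply: divr_gt0; lra.
  have [s [s0 sd s1 se]] := @small_s _ _ _ d0 e0.
  have s00 : s != 0 by rewrite gt_eqF.
  have := hD s s00; rewrite gtr0_norm // => /(_ sd).
  have := htail s; rewrite gtr0_norm // => /(_ s1) /ler_normlP [_ htl].
  rewrite a1E mul0r add0r => hpos.
  have s3 : s ^+ 3 = s * s ^+ 2 by rewrite exprS.
  have h6 : K * s <= K * (- a2 / (2 * (K + 1))) by rewrite ler_wpM2l.
  have h7 : K * (- a2 / (2 * (K + 1))) < - a2.
    rewrite mulrA ltr_pdivrMr; last by lra.
    nra.
  have s2 : 0 < s ^+ 2 by rewrite exprn_gt0.
  move: h7 h6; set e := K * _ => h7 h6.
  have : s ^+ 2 * (K * s) <= s ^+ 2 * e by rewrite ler_wpM2l // ltW.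
  rewrite s3 in htl.
  nra.
by [].
Qed.

Section Var.
Variable R : realType.
Variable n : nat.
Variable A : 'M[R]_n.

Definition bil (x z : 'cV[R]_n) := (x^T *m A *m z) 0 0.

Lemma bilDl x1 x2 z : bil (x1 + x2) z = bil x1 z + bil x2 z.
Proof. by rewrite /bil linearD /= !mulmxDl mxE. Qed.
Lemma bilZl s x z : bil (s *: x) z = s * bil x z.
Proof. by rewrite /bil linearZ /= -!scalemxAl mxE. Qed.
Lemma bilDr x z1 z2 : bil x (z1 + z2) = bil x z1 + bil x z2.
Proof. by rewrite /bil !mulmxDr mxE. Qed.
Lemma bilZr s x z : bil x (s *: z) = s * bil x z.
Proof. by rewrite /bil -!scalemxAr mxE. Qed.
Lemma bil_sym x z : A^T = A -> bil x z = bil z x.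
Proof.
move=> sA; rewrite /bil; have -> : (x^T *m A *m z) 0 0 = ((x^T *m A *m z)^T) 0 0 by rewrite [RHS]mxE.
by rewrite !trmx_mul trmxK sA mulmxA.
Qed.

Lemma sum_sq_lin (x u : 'cV[R]_n) p q :
  \sum_i (p * x i 0 + q * u i 0) ^+ 2 =
  p ^+ 2 * \sum_i x i 0 ^+ 2 + 2 * p * q * \sum_i x i 0 * u i 0 + q ^+ 2 * \sum_i u i 0 ^+ 2.
Proof.
rewrite (eq_bigr (fun i => p ^+ 2 * x i 0 ^+ 2 + 2 * p * q * (x i 0 * u i 0) + q ^+ 2 * u i 0 ^+ 2)); last by move=> i _; ring.
by rewrite !big_split /= -!mulr_sumr.
Qed.

Lemma sum_4_lin (x u : 'cV[R]_n) p q :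
  \sum_i (p * x i 0 + q * u i 0) ^+ 4 =
  p ^+ 4 * \sum_i x i 0 ^+ 4 + 4 * p ^+ 3 * q * \sum_i x i 0 ^+ 3 * u i 0
  + 6 * p ^+ 2 * q ^+ 2 * \sum_i x i 0 ^+ 2 * u i 0 ^+ 2
  + 4 * p * q ^+ 3 * \sum_i x i 0 * u i 0 ^+ 3 + q ^+ 4 * \sum_i u i 0 ^+ 4.
Proof.
rewrite (eq_bigr (fun i => p ^+ 4 * x i 0 ^+ 4 + 4 * p ^+ 3 * q * (x i 0 ^+ 3 * u i 0)
  + 6 * p ^+ 2 * q ^+ 2 * (x i 0 ^+ 2 * u i 0 ^+ 2)
  + 4 * p * q ^+ 3 * (x i 0 * u i 0 ^+ 3) + q ^+ 4 * u i 0 ^+ 4)); last by move=> i _; ring.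
by rewrite !big_split /= -!mulr_sumr.
Qed.

Lemma tail_bound (a3 a4 a5 a6 a7 t : R) : `|t| <= 1 ->
  `|t ^+ 3 * (a3 + a4 * t + a5 * t ^+ 2 + a6 * t ^+ 3 + a7 * t ^+ 4)|
  <= (`|a3| + `|a4| + `|a5| + `|a6| + `|a7|) * `|t| ^+ 3.
Proof.
move=> t1; rewrite normrM normrX mulrC ler_wpM2r ?exprn_ge0 //.
have hk k (a : R) : `|a * t ^+ k| <= `|a|.
  rewrite normrM normrX ler_piMr ?exprn_ile1 //.
have := hk 1%N a4; have := hk 2%N a5; have := hk 3%N a6; have := hk 4%N a7.
rewrite expr1 => h7 h6 h5 h4.
apply: (le_trans (ler_normD _ _)); rewrite lerD //.
apply: (le_trans (ler_normD _ _)); rewrite lerD //.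
apply: (le_trans (ler_normD _ _)); rewrite lerD //.
by apply: (le_trans (ler_normD _ _)); rewrite lerD.
Qed.


Lemma var_cond b (y v : 'cV[R]_n) : A^T = A ->
  local_min_on (fobj A b) (@sphere R n) y -> \sum_i y i 0 * v i 0 = 0 ->
  2 * bil y v + 4 * b * (\sum_i y i 0 ^+ 3 * v i 0) = 0 /\
  0 <= 2 * qform A v + 12 * b * (\sum_i y i 0 ^+ 2 * v i 0 ^+ 2)
       - 2 * (\sum_i v i 0 ^+ 2) * (qform A y + 2 * b * \sum_i y i 0 ^+ 4).
Proof.
move=> sA [Sy [eps [eps0 hmin]]] yv.
rewrite /sphere /= in Sy.
set c := \sum_i v i 0 ^+ 2.
set Qy := qform A y; set P := bil y v; set Qv := qform A v.
set S := \sum_i y i 0 ^+ 4; set S31 := \sum_i y i 0 ^+ 3 * v i 0.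
set S22 := \sum_i y i 0 ^+ 2 * v i 0 ^+ 2.
set S13 := \sum_i y i 0 * v i 0 ^+ 3; set S04 := \sum_i v i 0 ^+ 4.
have c0 : 0 <= c by apply: sumr_ge0 => i _; exact: sqr_ge0.
pose a3 := 16 * S13 * b - 12 * c * S31 * b + 2 * c * P.
pose a4 := 8 * S04 * b - 24 * c * S22 * b + 4 * c * Qv - 4 * c ^+ 2 * Qy.
pose a5 := - 16 * c * S13 * b + 12 * c ^+ 2 * S31 * b - 2 * c ^+ 2 * P.
pose a6 := 12 * c ^+ 2 * S22 * b + 2 * c ^+ 2 * Qv - 4 * c ^+ 3 * S * b - 2 * c ^+ 3 * Qy.
pose a7 := - 4 * c ^+ 3 * S31 * b - 2 * c ^+ 3 * P.
have d0 : 0 < eps / (2 * c + 1) by apply: divr_gt0 => //; lra.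
have HD : forall t, t != 0 -> `|t| < eps / (2 * c + 1) ->
    0 <= (2 * P + 4 * b * S31) * t + (2 * Qv + 12 * b * S22 - 2 * c * (Qy + 2 * b * S)) * t ^+ 2 +
     t ^+ 3 * (a3 + a4 * t + a5 * t ^+ 2 + a6 * t ^+ 3 + a7 * t ^+ 4).
  move=> t _ ht.
  pose al := 1 - c * t ^+ 2; pose be := 1 + c * t ^+ 2.
  have be0 : 0 < be by rewrite /be; have := sqr_ge0 t; nra.
  pose w := al *: y + (2 * t) *: v.
  pose zt := be^-1 *: w.
  have ztE i : zt i 0 = be^-1 * (al * y i 0 + (2 * t) * v i 0) by rewrite !mxE.
  have Hz : sphere zt.
    rewrite /sphere /=.
    rewrite (eq_bigr (fun i => (be^-1 * al * y i 0 + be^-1 * (2 * t) * v i 0) ^+ 2)); last first.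
      by move=> i _; rewrite ztE; ring.
    rewrite sum_sq_lin Sy yv -/c /be /al; field.
    by rewrite lt0r_neq0 // -/be.
  have Hd : \sum_i (zt i 0 - y i 0) ^+ 2 < eps ^+ 2.
    rewrite (eq_bigr (fun i => ((be^-1 * al - 1) * y i 0 + be^-1 * (2 * t) * v i 0) ^+ 2)); last first.
      by move=> i _; rewrite ztE; ring.
    rewrite sum_sq_lin Sy yv -/c.
    have -> : (be^-1 * al - 1) ^+ 2 * 1 + 2 * (be^-1 * al - 1) * (be^-1 * (2 * t)) * 0 +
       (be^-1 * (2 * t)) ^+ 2 * c = 4 * c * t ^+ 2 / be.
      rewrite /be /al; field; by rewrite lt0r_neq0 // -/be.
    have t2 : t ^+ 2 < (eps / (2 * c + 1)) ^+ 2.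
      by rewrite -real_normK ?num_real; have := normr_ge0 t; move: ht; set dd := eps / _; nra.
    have h4 : 4 * c * t ^+ 2 / be <= 4 * c * t ^+ 2.
      rewrite ler_pdivrMr // ler_peMr //; first by rewrite mulr_ge0 ?sqr_ge0 // mulr_ge0.
      by rewrite /be lerDl mulr_ge0 ?sqr_ge0.
    apply: (le_lt_trans h4).
    have h5 : 4 * c * t ^+ 2 <= 4 * c * (eps / (2 * c + 1)) ^+ 2.
      by rewrite ler_wpM2l ?mulr_ge0 // ltW.
    apply: (le_lt_trans h5).
    rewrite expr_div_n mulrA ltr_pdivrMr; last by rewrite exprn_gt0 //; lra.
    have e2 : 0 < eps ^+ 2 by rewrite exprn_gt0.
    nra.
  have := hmin zt Hz Hd.
  have fz : fobj A b zt = be^-2 * (al ^+ 2 * Qy + 4 * al * t * P + 4 * t ^+ 2 * Qv) / 2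
     + b / 2 * (be^-4 * (al ^+ 4 * S + 8 * al ^+ 3 * t * S31 + 24 * al ^+ 2 * t ^+ 2 * S22
         + 32 * al * t ^+ 3 * S13 + 16 * t ^+ 4 * S04)).
    rewrite /fobj; congr (_ / 2 + _ / 2 * _).
      rewrite /qform -/(bil zt zt) /zt /w !(bilZl, bilZr, bilDl, bilDr).
      rewrite (bil_sym v y sA) -/P /bil -/(qform A y) -/(qform A v) -/Qy -/Qv.
      by field; rewrite lt0r_neq0.
    rewrite (eq_bigr (fun i => (be^-1 * al * y i 0 + be^-1 * (2 * t) * v i 0) ^+ 4)); last first.
      by move=> i _; rewrite ztE; ring.
    rewrite sum_4_lin -/S -/S31 -/S22 -/S13 -/S04.
    field; by rewrite lt0r_neq0.
  rewrite fz /fobj -/Qy -/S => hle.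
  have : 0 <= be ^+ 4 * (be^-2 * (al ^+ 2 * Qy + 4 * al * t * P + 4 * t ^+ 2 * Qv) / 2
     + b / 2 * (be^-4 * (al ^+ 4 * S + 8 * al ^+ 3 * t * S31 + 24 * al ^+ 2 * t ^+ 2 * S22
         + 32 * al * t ^+ 3 * S13 + 16 * t ^+ 4 * S04)) - (Qy / 2 + b / 2 * S)).
    by apply: mulr_ge0; [rewrite exprn_ge0 // ltW | rewrite subr_ge0].
  have -> : be ^+ 4 * (be^-2 * (al ^+ 2 * Qy + 4 * al * t * P + 4 * t ^+ 2 * Qv) / 2
     + b / 2 * (be^-4 * (al ^+ 4 * S + 8 * al ^+ 3 * t * S31 + 24 * al ^+ 2 * t ^+ 2 * S22
         + 32 * al * t ^+ 3 * S13 + 16 * t ^+ 4 * S04)) - (Qy / 2 + b / 2 * S)) =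
     (2 * P + 4 * b * S31) * t + (2 * Qv + 12 * b * S22 - 2 * c * (Qy + 2 * b * S)) * t ^+ 2 +
     t ^+ 3 * (a3 + a4 * t + a5 * t ^+ 2 + a6 * t ^+ 3 + a7 * t ^+ 4).
    rewrite /al /be /a3 /a4 /a5 /a6 /a7; field; by rewrite lt0r_neq0 // -/be.
  by [].
have [h1 h2] := @poly_small _ (2 * P + 4 * b * S31)
   (2 * Qv + 12 * b * S22 - 2 * c * (Qy + 2 * b * S))
   (`|a3| + `|a4| + `|a5| + `|a6| + `|a7|) _
   (fun t => t ^+ 3 * (a3 + a4 * t + a5 * t ^+ 2 + a6 * t ^+ 3 + a7 * t ^+ 4)) d0
   (fun t ht => @tail_bound a3 a4 a5 a6 a7 t ht) HD.
split; first by rewrite h1.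
  by [].
Qed.

End Var.


Section Main.
Variable R : realType.
Variable n : nat.
Variable A : 'M[R]_n.

Lemma sum_delta (F : 'I_n -> R) k : \sum_i F i * (i == k)%:R = F k.
Proof.
rewrite (bigD1 k) //= eqxx mulr1 big1 ?addr0 // => i ik.
by rewrite (negbTE ik) mulr0.
Qed.

Lemma sum_constR (x : R) : \sum_(i < n) x = n%:R * x.
Proof. by rewrite sumr_const card_ord mulr_natl. Qed.

Definition vcol (y : 'cV[R]_n) k m : 'cV[R]_n :=
  \col_i (y m 0 * (i == k)%:R - y k 0 * (i == m)%:R).

Lemma sum_v (y : 'cV[R]_n) k m (F : 'I_n -> R) :
  \sum_i F i * vcol y k m i 0 = y m 0 * F k - y k 0 * F m.
Proof.
rewrite (eq_bigr (fun i => y m 0 * (F i * (i == k)%:R) - y k 0 * (F i * (i == m)%:R))).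
  by rewrite sumrB -!mulr_sumr !sum_delta.
by move=> i _; rewrite mxE; ring.
Qed.

Lemma sum_v2 (y : 'cV[R]_n) k m (F : 'I_n -> R) : k != m ->
  \sum_i F i * vcol y k m i 0 ^+ 2 = F k * y m 0 ^+ 2 + F m * y k 0 ^+ 2.
Proof.
move=> km.
rewrite (eq_bigr (fun i => y m 0 ^+ 2 * (F i * (i == k)%:R) + y k 0 ^+ 2 * (F i * (i == m)%:R))).
  by rewrite big_split /= -!mulr_sumr !sum_delta; ring.
move=> i _; rewrite mxE.
have [->|ik] := eqVneq i k.
  by rewrite ?eqxx (negbTE km) /= ?mulr1n ?mulr0n; ring.
have [->|im] := eqVneq i m.
  by rewrite ?eqxx /= ?mulr1n ?mulr0n; ring.
by rewrite ?(negbTE ik) ?(negbTE im) /= ?mulr1n ?mulr0n; ring.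
Qed.

Lemma qform_sum (z : 'cV[R]_n) : qform A z = \sum_i (A *m z) i 0 * z i 0.
Proof.
rewrite /qform -mulmxA mxE; apply: eq_bigr => i _; rewrite mxE mulrC.
by [].
Qed.

Lemma bil_sum (y v : 'cV[R]_n) : A^T = A -> bil A y v = \sum_i (A *m y) i 0 * v i 0.
Proof.
move=> sA; rewrite (bil_sym _ _ sA) /bil -mulmxA mxE.
by apply: eq_bigr => i _; rewrite mxE mulrC.
Qed.

Lemma ray (lam1 lamn : R) : A^T = A ->
  (forall a, eigenvalue A a -> lamn <= a <= lam1) -> forall z : 'cV[R]_n,
  [/\ lamn * \sum_i z i 0 ^+ 2 <= qform A z, qform A z <= lam1 * \sum_i z i 0 ^+ 2 &
     \sum_i ((A *m z) i 0 - lamn * z i 0) ^+ 2 <= (lam1 - lamn) ^+ 2 * \sum_i z i 0 ^+ 2].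
Proof.
move=> sA hev z.
have [c [a [c0 [ea [hs [hq ha]]]]]] := spec_repr sA z.
have ab i : lamn <= a i <= lam1 := hev _ (ea i).
rewrite hs /qform hq; split.
- rewrite mulr_sumr; apply: ler_sum => i _; rewrite mulrC ler_wpM2l //.
  by have /andP[] := ab i.
- rewrite mulr_sumr; apply: ler_sum => i _; rewrite [lam1 * _]mulrC ler_wpM2l //.
  by have /andP[] := ab i.
- rewrite (eq_bigr (fun i => (1 * (A *m z) i 0 + (- lamn) * z i 0) ^+ 2)); last by move=> i _; ring.
  rewrite sum_sq_lin -(qform_sum z) /qform hq hs ha.
  have -> : 1 ^+ 2 * \sum_i c i * a i ^+ 2 + 2 * 1 * - lamn * \sum_i c i * a i +
    (- lamn) ^+ 2 * \sum_i c i = \sum_i c i * (a i - lamn) ^+ 2.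
    rewrite !mulr_sumr -!big_split /=; apply: eq_bigr => i _; ring.
  rewrite mulr_sumr; apply: ler_sum => i _; rewrite mulrC ler_wpM2r //.
  have /andP[h1 h2] := ab i.
  rewrite -subr_ge0; have h3 : 0 <= a i - lamn by rewrite subr_ge0.
  have h4 : a i - lamn <= lam1 - lamn by rewrite lerB.
  nra.
Qed.

Lemma sumS_ge (z : 'cV[R]_n) : \sum_i z i 0 ^+ 2 = 1 -> (0 < n)%N ->
  \sum_i (z i 0 ^+ 2 - n%:R^-1) ^+ 2 = \sum_i z i 0 ^+ 4 - n%:R^-1 /\
  n%:R^-1 <= \sum_i z i 0 ^+ 4.
Proof.
move=> hz n0.
have N0 : (n%:R : R) != 0 by rewrite pnatr_eq0 -lt0n.
have E : \sum_i (z i 0 ^+ 2 - n%:R^-1) ^+ 2 = \sum_i z i 0 ^+ 4 - n%:R^-1.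
  rewrite (eq_bigr (fun i => z i 0 ^+ 4 + (- 2 * n%:R^-1) * z i 0 ^+ 2 + n%:R^-1 ^+ 2)); last first.
    by move=> i _; ring.
  rewrite !big_split /= -mulr_sumr hz sum_constR; field.
  done.
split => //; rewrite -subr_ge0 -E; apply: sumr_ge0 => i _; exact: sqr_ge0.
Qed.

End Main.
Lemma arith (R : realFieldType) (N b r T : R) : 2 <= N -> 0 < b -> 0 <= r ->
  4 * b ^+ 2 * T <= 7 * N * r ^+ 2 -> 18 * N ^+ 3 * r < b * (N - 1) ->
  r / 2 + b * T / 2 <= b / (36 * N ^+ 2).
Proof.
move=> N2 b0 r0 hT hb.
have N0 : 0 < N by lra.
pose p := 18 * N ^+ 2 * r.
have p0 : 0 <= p by rewrite /p mulr_ge0 // mulr_ge0 // exprn_ge0 // ltW.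
have hp : N * p < b * (N - 1) by rewrite /p; move: hb; congr (_ < _); ring.
have pb : p < b.
  have : N * p < N * b by apply: (lt_le_trans hp); nra.
  by rewrite ltr_pM2l.
have t1 : 2 * N * p * b <= 2 * b ^+ 2 * (N - 1) by nra.
have hT2 : 324 * N ^+ 4 * (4 * b ^+ 2 * T) <= 7 * N * p ^+ 2.
  have : 324 * N ^+ 4 * (4 * b ^+ 2 * T) <= 324 * N ^+ 4 * (7 * N * r ^+ 2).
    by rewrite ler_wpM2l // mulr_ge0 // exprn_ge0 // ltW.
  by move=> h; apply: (le_trans h); rewrite /p le_eqVlt; apply/orP; left; apply/eqP; ring.
have t2 : 36 * N ^+ 3 * b ^+ 2 * T <= 2 * b ^+ 2.
  have h7 : 7 * N * p ^+ 2 <= 7 * N * b ^+ 2.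
    rewrite ler_wpM2l ?mulr_ge0 ?ltW //; nra.
  have hN : 0 < N ^+ 4 by rewrite exprn_gt0.
  nra.
have key : 36 * N ^+ 3 * b * r + 36 * N ^+ 3 * b ^+ 2 * T <= 2 * N * b ^+ 2.
  have : 36 * N ^+ 3 * b * r = 2 * N * p * b by rewrite /p; ring.
  lra.
have hd : 0 < 72 * N ^+ 3 * b by rewrite mulr_gt0 // mulr_gt0 // exprn_gt0.
rewrite -(ler_pM2l hd).
have -> : 72 * N ^+ 3 * b * (r / 2 + b * T / 2) = 36 * N ^+ 3 * b * r + 36 * N ^+ 3 * b ^+ 2 * T.
  by field.
have -> : 72 * N ^+ 3 * b * (b / (36 * N ^+ 2)) = 2 * N * b ^+ 2.
  by field; rewrite gt_eqF.
exact: key.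
Qed.

Unset Implicit Arguments.
Theorem theorem13 (R : realType) (n : nat) (A : 'M[R]_n) (lam1 lamn beta : R)
  (y : 'cV[R]_n) :
  (2 <= n)%N ->
  symmetric_mx A -> posdef_mx A ->
  eigenvalue A lam1 -> eigenvalue A lamn ->
  (forall a, eigenvalue A a -> lamn <= a <= lam1) ->
  beta > (18 * n%:R ^+ 3) / (n%:R - 1) * (lam1 - lamn) ->
  local_min_on (fobj A beta) (@sphere R n) y ->
  fobj A beta y - inf [set fobj A beta z | z in @sphere R n]
    <= 1 / (18 * n%:R) * inf [set fobj A beta z | z in @sphere R n].
Proof.
move=> n2 sA pd e1 en hev hb hy.
have n0 : (0 < n)%N by apply: leq_trans n2.
have yS : \sum_i y i 0 ^+ 2 = 1 by case: hy.
have N2 : (2 : R) <= n%:R by rewrite (ler_nat R 2 n).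
move: hb N2; set N : R := n%:R => hb N2.
have N0 : 0 < N by lra.
have N1 : 0 < N - 1 by lra.
have lnl1 : lamn <= lam1 by have /andP[] := hev _ e1.
have r0 : 0 <= lam1 - lamn by rewrite subr_ge0.
have hb2 : 18 * N ^+ 3 * (lam1 - lamn) < beta * (N - 1).
  by move: hb; rewrite mulrAC ltr_pdivrMr.
have hX : 0 <= 18 * N ^+ 3 * (lam1 - lamn).
  by rewrite mulr_ge0 // mulr_ge0 // exprn_ge0 // ltW.
have b0 : 0 < beta.
  have : 0 < beta * (N - 1) by apply: le_lt_trans hb2.
  by rewrite pmulr_lgt0.
have hr1 : 18 * N ^+ 2 * (lam1 - lamn) < beta.
  have : N * (18 * N ^+ 2 * (lam1 - lamn)) < N * beta.
    have -> : N * (18 * N ^+ 2 * (lam1 - lamn)) = 18 * N ^+ 3 * (lam1 - lamn) by ring.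
    apply: (lt_le_trans hb2); nra.
  by rewrite ltr_pM2l.
have [Qyl Qyu Hy3] := ray sA hev y.
rewrite yS !mulr1 in Qyl Qyu Hy3.
have [Sid S1] := sumS_ge yS n0.
move: Sid S1; set S := \sum_i y i 0 ^+ 4 => Sid S1.
pose g i := (A *m y) i 0 + 2 * beta * y i 0 ^+ 3.
have fo k m : g k * y m 0 = g m * y k 0.
  have yv : \sum_i y i 0 * vcol y k m i 0 = 0 by rewrite sum_v; ring.
  have [h1 _] := var_cond sA hy yv.
  move: h1; rewrite (bil_sum _ _ sA) !sum_v /g => h1.
  lra.
pose mu := \sum_m g m * y m 0.
have gmu k : g k = y k 0 * mu.
  transitivity (g k * \sum_m y m 0 ^+ 2); first by rewrite yS mulr1.
  rewrite mulr_sumr /mu mulr_sumr; apply: eq_bigr => m _.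
  by rewrite expr2 mulrA fo; ring.
have muE : mu = qform A y + 2 * beta * S.
  rewrite /mu qform_sum /S mulr_sumr -big_split; apply: eq_bigr => i _; rewrite /g /=; ring.
have [m0 hm0] : exists m, N^-1 <= y m 0 ^+ 2.
  case: (boolP [exists m : 'I_n, N^-1 <= y m 0 ^+ 2]) => [/existsP [m hm]|/existsPn H].
    by exists m.
  exfalso.
  have : \sum_i y i 0 ^+ 2 < \sum_(i < n) N^-1.
    apply: ltr_sum; first by apply/hasP; exists (Ordinal n0); rewrite ?mem_index_enum.
    by move=> i _; rewrite ltNge; apply: H.
  by rewrite sum_constR yS -/N mulfV ?gt_eqF // ltxx.
have ylow k : 1 <= 7 * N * y k 0 ^+ 2.
  have [->|km] := eqVneq k m0.
    have := ler_wpM2l (ltW N0) hm0; rewrite mulfV ?gt_eqF // => h.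
    have := sqr_ge0 (y m0 0); nra.
  have yv : \sum_i y i 0 * vcol y k m0 i 0 = 0 by rewrite sum_v; ring.
  have [_ h2] := var_cond sA hy yv.
  have c_eq : \sum_i vcol y k m0 i 0 ^+ 2 = y m0 0 ^+ 2 + y k 0 ^+ 2.
    rewrite (eq_bigr (fun i => 1 * vcol y k m0 i 0 ^+ 2)); last by move=> i _; rewrite mul1r.
    by rewrite (sum_v2 y (fun=> 1) km) !mul1r.
  have s22 := sum_v2 y (fun i => y i 0 ^+ 2) km.
  have [_ Qv _] := ray sA hev (vcol y k m0).
  rewrite c_eq in h2 Qv; rewrite s22 in h2.
  move: h2 Qv; set a := y k 0 ^+ 2; set bm := y m0 0 ^+ 2 => h2 Qv.
  have a0 : 0 <= a by apply: sqr_ge0.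
  have bm0 : 0 < bm by apply: lt_le_trans hm0; rewrite invr_gt0.
  have c0 : 0 <= bm + a by lra.
  have hcq : (bm + a) * lamn <= (bm + a) * qform A y by rewrite ler_wpM2l.
  have hc : (bm + a) * (2 * beta * S - (lam1 - lamn)) <= 12 * beta * a * bm.
    rewrite -muE in h2; rewrite muE in h2; nra.
  have hSr : 0 <= 2 * beta * S - (lam1 - lamn).
    have : beta * N^-1 <= beta * S by rewrite ler_wpM2l // ltW.
    have : 18 * N * (lam1 - lamn) <= 18 * N ^+ 2 * (lam1 - lamn).
      have h : 0 <= 18 * N * (lam1 - lamn) * (N - 1) by rewrite !mulr_ge0 // ?ltW.
      by rewrite expr2; lra.
    have : N^-1 * (18 * N * (lam1 - lamn)) = 18 * (lam1 - lamn) by field; rewrite gt_eqF.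
    have : 0 < beta * N^-1 by rewrite mulr_gt0 // invr_gt0.
    nra.
  have hc2 : bm * (2 * beta * S - (lam1 - lamn)) <= bm * (12 * beta * a).
    have : a * (2 * beta * S - (lam1 - lamn)) >= 0 by rewrite mulr_ge0.
    nra.
  rewrite ler_pM2l // in hc2.
  have hNS : 1 <= N * S by rewrite -(mulfV (lt0r_neq0 N0)) ler_wpM2l // ltW.
  have h7 : 7 * N * (lam1 - lamn) <= 18 * N ^+ 2 * (lam1 - lamn).
    rewrite ler_wpM2r // expr2 mulrA ler_wpM2r ?ltW //; lra.
  have : 12 * beta <= 12 * beta * (7 * N * a) by nra.
  by rewrite -[X in X <= _]mulr1 ler_pM2l //; last by rewrite mulr_gt0.
have hk k : (A *m y) k 0 - lamn * y k 0 = (mu - lamn - 2 * beta * y k 0 ^+ 2) * y k 0.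
  have := gmu k; rewrite /g => e.
  have -> : (A *m y) k 0 = y k 0 * mu - 2 * beta * y k 0 ^+ 3 by lra.
  ring.
move: hk; set D := mu - lamn => hk.
have sumD : \sum_i (D - 2 * beta * y i 0 ^+ 2) ^+ 2 = N * D ^+ 2 - 4 * beta * D + 4 * beta ^+ 2 * S.
  rewrite (eq_bigr (fun i => D ^+ 2 + (- 4 * beta * D) * y i 0 ^+ 2 + 4 * beta ^+ 2 * y i 0 ^+ 4)); last by move=> i _; ring.
  rewrite !big_split /= -!mulr_sumr yS sum_constR -/N -/S; ring.
have lowsum : \sum_i (D - 2 * beta * y i 0 ^+ 2) ^+ 2 <= 7 * N * (lam1 - lamn) ^+ 2.
  apply: (le_trans _ (ler_wpM2l _ Hy3)); last by rewrite mulr_ge0 // ltW.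
  rewrite mulr_sumr; apply: ler_sum => i _; rewrite hk exprMn.
  have := ylow i; have := sqr_ge0 (D - 2 * beta * y i 0 ^+ 2); nra.
rewrite sumD in lowsum.
have heps : 4 * beta ^+ 2 * (S - N^-1) <= 7 * N * (lam1 - lamn) ^+ 2.
  have : 0 <= N * (D - 2 * beta / N) ^+ 2 by rewrite mulr_ge0 ?sqr_ge0 // ltW.
  have -> : N * (D - 2 * beta / N) ^+ 2 = N * D ^+ 2 - 4 * beta * D + 4 * beta ^+ 2 / N.
    by field; rewrite gt_eqF.
  move=> h; lra.
have ar := arith N2 b0 r0 heps hb2.
set E := [set fobj A beta z | z in @sphere R n].
have Ene : E !=set0 by exists (fobj A beta y); exists y => //; case: hy.
have lbz z : sphere z -> lamn / 2 + beta / (2 * N) <= fobj A beta z /\ beta / (2 * N) <= fobj A beta z.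
  move=> hz; have [Ql _ _] := ray sA hev z; rewrite hz mulr1 in Ql.
  have [_ Sz] := sumS_ge hz n0.
  have Qp : 0 < qform A z.
    apply: pd; apply/eqP => z0; move: hz; rewrite /sphere /= z0.
    rewrite (eq_bigr (fun _ => 0)); last by move=> i _; rewrite mxE expr0n.
    by rewrite big1 // => /eqP; rewrite eq_sym oner_eq0.
  have : beta / 2 * N^-1 <= beta / 2 * \sum_i z i 0 ^+ 4 by rewrite ler_wpM2l // divr_ge0 // ltW.
  have -> : beta / 2 * N^-1 = beta / (2 * N) by rewrite invfM mulrA.
  rewrite /fobj => h; split; lra.
have M1 : lamn / 2 + beta / (2 * N) <= inf E.
  apply: (@lb_le_inf R E _ Ene) => x [z hz <-]; exact: (lbz z hz).1.
have M2 : beta / (2 * N) <= inf E.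
  apply: (@lb_le_inf R E _ Ene) => x [z hz <-]; exact: (lbz z hz).2.
have M3 : beta / (36 * N ^+ 2) <= 1 / (18 * N) * inf E.
  have -> : beta / (36 * N ^+ 2) = 1 / (18 * N) * (beta / (2 * N)) by field; rewrite gt_eqF.
  by rewrite ler_wpM2l // divr_ge0 // mulr_ge0 // ltW.
have fy : fobj A beta y <= lam1 / 2 + beta / 2 * S by rewrite /fobj -/S; lra.
have : beta * (S - N^-1) / 2 = beta / 2 * S - beta / (2 * N) by field; rewrite gt_eqF.
lra.
Qed.
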